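(* Let $\Bbbk=\mathbb C$ and let $\mathcal H\subset\mathcal{H}ilb_{28}(\mathbb P^6)$ be the irreducible component whose general element $[R]$ is a subscheme $R\subset\mathbb P^6$ supported at two points such that, near each of its two points, $R$ is isomorphic to a local Gorenstein scheme $\operatorname{Spec}A$ of length $14$ with Hilbert function $(1,6,6,1)$ (i.e. $A$ local Artinian Gorenstein with $\dim\mathfrak m^j/\mathfrak m^{j+1}=1,6,6,1$ for $j=0,1,2,3$). Then $$h_R(2)=h_{\mathcal H}(2)\le 27<h_{28,\mathbb P^6}(2)=28.$$
   Context: For a finite subscheme $R\subset\mathbb P^n$, $h_R(d)=\dim(\mathbb C[x_0,\dots,x_n]/I(R))_d$ with $I(R)$ the saturated homogeneous ideal; $h_{\mathcal H}$ is $h_R$ for general $[R]\in\mathcal H$; $h_{r,\mathbb P^n}(d)=\min\{r,\binom{n+d}{d}\}$. *)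

(* Defs.v *)
From HB Require Import structures.
From mathcomp Require Import all_boot all_order all_algebra.
From mathcomp Require Import reals.
From mathcomp Require Import complex.
From mathcomp Require Import mpoly.

Set Implicit Arguments.
Unset Strict Implicit.
Unset Printing Implicit Defensive.

Import Order.TTheory GRing.Theory Num.Theory.
Local Open Scope ring_scope.

Section Defs.
Variables (K : fieldType) (n : nat).
Notation P := {mpoly K[n]}.

Definition is_ideal (I : P -> Prop) : Prop :=
  [/\ I 0, (forall p q, I p -> I q -> I (p + q)) & (forall p q, I q -> I (p * q))].

Definition ideal_add (I J : P -> Prop) : P -> Prop :=
  fun p => exists q r, [/\ I q, J r & p = q + r].
Definition ideal_cap (I J : P -> Prop) : P -> Prop := fun p => I p /\ J p.

Definition ideal_colon (I J : P -> Prop) : P -> Prop :=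
  fun p => forall q, J q -> I (p * q).

Definition translate (a : 'I_n -> K) (p : P) : P :=
  p \mPo [tuple ('X_i + (a i)%:MP) | i < n].

(* The j-th power of the maximal ideal m_a of the point a in K^n:
   polynomials all of whose Taylor coefficients at a of order < j vanish. *)
Definition mpow (a : 'I_n -> K) (j : nat) : P -> Prop :=
  fun p => forall m : 'X_{1..n}, (mdeg m < j)%N -> (translate a p)@_m = 0.

(* dim_K (V + I)/I = d, for the K-subspace V (given as a predicate) of P:
   there are d elements of V, linearly independent modulo I, and every
   element of V is congruent modulo I to a linear combination of them. *)
Definition dim_mod (V I : P -> Prop) (d : nat) : Prop :=
  exists b : 'I_d -> P,
    [/\ (forall i, V (b i)),
        (forall c : 'I_d -> K, I (\sum_i c i *: b i) -> forall i, c i = 0) &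
        (forall p, V p -> exists c : 'I_d -> K, I (p - \sum_i c i *: b i))].

Definition colength (I : P -> Prop) (d : nat) : Prop := dim_mod (fun _ => True) I d.

Definition deg_le (d : nat) : P -> Prop := fun p => (msize p <= d.+1)%N.

End Defs.

(* The affine chart A^n = {x_0 <> 0} of P^n.  For a finite subscheme R of P^n
   contained in this chart with ideal I in K[x_1..x_n], the degree-d part of
   the saturated homogeneous ideal I(R) is the homogenization of the space of
   polynomials of degree <= d in I; hence
   h_R(d) = dim_K (K[x]_{<=d} + I)/I. *)
Definition hR (K : fieldType) (n : nat) (I : {mpoly K[n]} -> Prop) (d h : nat) : Prop :=
  dim_mod (@deg_le K n d) I h.

Definition hgen (r n d : nat) : nat := minn r 'C(n + d, d).

(* I is the ideal of a local scheme supported at a, isomorphic to Spec A with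
   A = K[x]/I local Artinian Gorenstein of length 14 with Hilbert function
   (1,6,6,1):  I is m_a-primary (contains m_a^4), dim m^j/m^{j+1} of A are
   1,6,6,1 for j = 0..3 (equivalently dim A/m^{j} = 0,1,7,13,14 for
   j = 0..4), and the socle (I : m_a)/I of A is one-dimensional. *)
Definition local_gor_1661 (K : fieldType) (n : nat) (a : 'I_n -> K)
    (I : {mpoly K[n]} -> Prop) : Prop :=
  [/\ is_ideal I,
      (forall p, mpow a 4 p -> I p) &
      colength (ideal_add I (mpow a 0)) 0] /\
  [/\
      colength (ideal_add I (mpow a 1)) 1,
      colength (ideal_add I (mpow a 2)) 7,
      colength (ideal_add I (mpow a 3)) 13,
      colength I 14 &
      dim_mod (ideal_colon I (mpow a 1)) I 1].

(* Main.v *)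
Require Import Defs.
From HB Require Import structures.
From mathcomp Require Import all_boot all_order all_algebra.
From mathcomp Require Import reals.
From mathcomp Require Import complex.
From mathcomp Require Import mpoly.
From Stdlib Require Import Classical ClassicalEpsilon FunctionalExtensionality.
From mathcomp Require Import zify ring.
Import GRing.Theory.
Local Open Scope ring_scope.
Set Implicit Arguments.
Unset Strict Implicit.
Unset Printing Implicit Defensive.

Section LinAlg.
Variables (K : fieldType) (V : lmodType K).

Definition subsp (J : V -> Prop) :=
  [/\ J 0, (forall p q, J p -> J q -> J (p + q)) & (forall c p, J p -> J (c *: p))].
Definition indep (J : V -> Prop) m (b : 'I_m -> V) :=
  forall c : 'I_m -> K, J (\sum_i c i *: b i) -> forall i, c i = 0.
Definition spanJ (J : V -> Prop) N (w : 'I_N -> V) p :=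
  exists c : 'I_N -> K, J (p - \sum_i c i *: w i).
Definition mydim (Vp J : V -> Prop) d :=
  exists b : 'I_d -> V,
    [/\ (forall i, Vp (b i)), indep J b & (forall p, Vp p -> spanJ J b p)].

Variable J : V -> Prop.
Hypothesis HJ : subsp J.

Lemma subsp0 : J 0. Proof. by case: HJ. Qed.
Lemma subspD p q : J p -> J q -> J (p + q). Proof. by case: HJ => _ H _; apply: H. Qed.
Lemma subspZ c p : J p -> J (c *: p). Proof. by case: HJ => _ _ H; apply: H. Qed.
Lemma subspN p : J p -> J (- p). Proof. by move=> Jp; rewrite -scaleN1r; apply: subspZ. Qed.
Lemma subspB p q : J p -> J q -> J (p - q). Proof. by move=> *; apply: subspD => //; apply: subspN. Qed.
Lemma subsp_sum (I : finType) (F : I -> V) : (forall i, J (F i)) -> J (\sum_i F i).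
Proof.
move=> H; apply: (big_ind J) => //; [exact: subsp0 | by move=> *; apply: subspD].
Qed.

End LinAlg.

Section Ext.
Variable T : Type.
Definition ext m (f : 'I_m -> T) (x : T) : 'I_m.+1 -> T :=
  fun k => match unlift ord_max k with Some j => f j | None => x end.
Lemma ext_lift m (f : 'I_m -> T) x j : ext f x (lift ord_max j) = f j.
Proof. by rewrite /ext liftK. Qed.
Lemma ext_max m (f : 'I_m -> T) x : ext f x ord_max = x.
Proof. by rewrite /ext unlift_none. Qed.
End Ext.

Lemma sum_recr (M : nmodType) m (G : 'I_m.+1 -> M) :
  \sum_(k < m.+1) G k = \sum_(j < m) G (lift ord_max j) + G ord_max.
Proof.
rewrite big_ord_recr /=; congr (_ + _); apply: eq_bigr => j _; congr G.
by apply: val_inj; rewrite /= /bump leqNgt ltn_ord.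
Qed.

Lemma free_rows (K : fieldType) k N (A : 'M[K]_(k, N)) :
  (forall y : 'rV_k, y *m A = 0 -> y = 0) -> (k <= N)%N.
Proof. by move/inj_row_free => /eqP <-; apply: rank_leq_col. Qed.

Section LinAlg2.
Variables (K : fieldType) (V : lmodType K) (J : V -> Prop).
Hypothesis HJ : subsp J.

Lemma indep_lt N (w : 'I_N -> V) (c : 'I_N -> K) m (b : 'I_m -> V) :
  J (\sum_i c i *: w i) -> (exists i, c i != 0) ->
  (forall j, spanJ J w (b j)) -> indep J b -> (m < N)%N.
Proof.
move=> Jc [i0 ci0] /fin_all_exists [M HM] Ib.
pose A := \matrix_(k < m.+1, i < N) ext (fun j => M j i) (c i) k.
apply: (free_rows (A := A)) => y yA.
have E i : \sum_j y 0 (lift ord_max j) * M j i + y 0 ord_max * c i = 0.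
  have := congr1 (fun z : 'M[K]_(1, N) => z 0 i) yA; rewrite !mxE sum_recr /= !mxE ext_max.
  by rewrite (eq_bigr (fun j => y 0 (lift ord_max j) * M j i)) // => j _; rewrite !mxE ext_lift.
set t := y 0 ord_max.
have E' i : \sum_j (y 0 (lift ord_max j) * M j i) = - (t * c i).
  by apply/eqP; rewrite -addr_eq0 E.
have Jb : J (\sum_j y 0 (lift ord_max j) *: b j).
  have J1 : J (\sum_j y 0 (lift ord_max j) *: (b j - \sum_i M j i *: w i)).
    by apply: subsp_sum => // j; apply: subspZ.
  have J2 := subspZ HJ (- t) Jc.
  have := subspD HJ J1 J2.
  congr J; rewrite (eq_bigr (fun j => y 0 (lift ord_max j) *: b j -
      \sum_i (y 0 (lift ord_max j) * M j i) *: w i)); last first.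
    by move=> j _; rewrite scalerBr scaler_sumr; congr (_ - _); apply: eq_bigr => i _; rewrite scalerA.
  rewrite sumrB exchange_big /=.
  rewrite (eq_bigr (fun i => (- (t * c i)) *: w i)); last first.
    by move=> i _; rewrite -scaler_suml E'.
  rewrite scaler_sumr [X in _ + X](eq_bigr (fun i => (- (t * c i)) *: w i)) ?subrK // => i _.
  by rewrite scalerA mulNr.
have y0 := Ib _ Jb.
have t0 : t = 0.
  have := E' i0; rewrite big1; last by move=> j _; rewrite y0 mul0r.
  move/eqP; rewrite eq_sym oppr_eq0 mulf_eq0 (negbTE ci0) orbF => /eqP //.
apply/matrixP => r k; rewrite !mxE (ord1 r).
case: (unliftP ord_max k) => [j ->|->]; first by rewrite y0.
exact: t0.
Qed.

Lemma indep_le N (w : 'I_N -> V) m (b : 'I_m -> V) :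
  (forall j, spanJ J w (b j)) -> indep J b -> (m <= N)%N.
Proof.
move=> Sb Ib.
have := @indep_lt N.+1 (ext w 0) (ext (fun _ => 0) 1) m b.
apply => //.
- rewrite sum_recr !ext_max scale1r big1 ?add0r; first exact: (subsp0 HJ).
  by move=> i _; rewrite ext_lift scale0r.
- by exists ord_max; rewrite ext_max oner_eq0.
- move=> j; case: (Sb j) => cc Hc; exists (ext cc 0).
  move: Hc; rewrite sum_recr ext_max scale0r addr0; congr J; congr (_ - _).
  by apply: eq_bigr => i _; rewrite !ext_lift.
Qed.

Lemma max_nat (P : nat -> Prop) N : P 0%N -> (forall k, P k -> (k < N)%N) ->
  exists k, P k /\ forall k', P k' -> (k' <= k)%N.
Proof.
move=> P0 HN.
suff: forall d n, (N - n <= d)%N -> P n -> exists k, P k /\ forall k', P k' -> (k' <= k)%N.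
  by move=> H; apply: (H N 0%N) => //; rewrite subn0.
elim=> [|d IH] n Hd Pn.
  by have := HN _ Pn; move: Hd; clear; lia.
case: (classic (forall k', P k' -> (k' <= n)%N)) => [H|]; first by exists n.
move/not_all_ex_not => [k' Hk']; have [Pk' nk'] := imply_to_and _ _ Hk'; move/negP: nk'; rewrite -ltnNge => nk'.
apply: (IH k') => //; have := HN _ Pk'; move: Hd nk'; clear; lia.
Qed.

Lemma exists_dim (Vp : V -> Prop) N (w : 'I_N -> V) (c : 'I_N -> K) :
  (forall p, Vp p -> spanJ J w p) ->
  J (\sum_i c i *: w i) -> (exists i, c i != 0) ->
  exists h, (h < N)%N /\ mydim Vp J h.
Proof.
move=> Sw Jc nzc.
pose P k := exists b : 'I_k -> V, (forall i, Vp (b i)) /\ indep J b.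
have P0 : P 0%N by exists (fun _ => 0); split=> [[]|c' _ []].
have HN k : P k -> (k < N)%N.
  by move=> [b [Vb Ib]]; apply: (indep_lt Jc nzc _ Ib) => j; apply: Sw.
have [k [[b [Vb Ib]] Hk]] := max_nat P0 HN.
exists k; split; first by apply: HN; exists b.
exists b; split => // p Vp_p.
apply: NNPP => Np.
have : (k.+1 <= k)%N; last by rewrite ltnn.
apply: Hk; exists (ext b p); split.
  by move=> i; rewrite /ext; case: (unlift _ _).
move=> y; rewrite sum_recr => Jy.
have tz : y ord_max = 0.
  apply: NNPP => /eqP nz; apply: Np.
  exists (fun j => - (y ord_max)^-1 * y (lift ord_max j)).
  have := subspZ HJ (y ord_max)^-1 Jy; congr J.
  rewrite scalerDr ext_max scalerA mulVf // scale1r scaler_sumr addrC; congr (_ + _).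
  rewrite -sumrN; apply: eq_bigr => j _; rewrite ext_lift scalerA mulNr scaleNr opprK.
  done.
move=> i; case: (unliftP ord_max i) => [j ->|->] //.
move: Jy; rewrite tz scale0r addr0 => Jy.
apply: (Ib (fun j => y (lift ord_max j))); move: Jy.
by congr J; apply: eq_bigr => j' _; rewrite ext_lift.
Qed.

End LinAlg2.


Section MP.
Variables (K : fieldType) (n : nat).
Notation P := {mpoly K[n]}.

Lemma ideal_subsp (I : P -> Prop) : is_ideal I -> subsp I.
Proof.
case=> I0 ID IM; split => // c p Ip; rewrite -mul_mpolyC; exact: IM.
Qed.

Lemma translateX (a : 'I_n -> K) i : translate a 'X_i = 'X_i + (a i)%:MP.
Proof. by rewrite /translate comp_mpolyXU -tnth_nth tnth_map tnth_ord_tuple. Qed.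
Lemma translateC (a : 'I_n -> K) c : translate a c%:MP = c%:MP.
Proof. by rewrite /translate comp_mpolyC. Qed.
Lemma translateM (a : 'I_n -> K) p q : translate a (p * q) = translate a p * translate a q.
Proof. by rewrite /translate rmorphM. Qed.
Lemma translateD (a : 'I_n -> K) p q : translate a (p + q) = translate a p + translate a q.
Proof. by rewrite /translate raddfD. Qed.
Lemma translateB (a : 'I_n -> K) p q : translate a (p - q) = translate a p - translate a q.
Proof. by rewrite /translate raddfB. Qed.
Lemma translateZ (a : 'I_n -> K) c p : translate a (c *: p) = c *: translate a p.
Proof. by rewrite /translate comp_mpolyZ. Qed.
Lemma translate1 (a : 'I_n -> K) : translate a 1 = 1.
Proof. by rewrite /translate comp_mpoly1. Qed.

Lemma mpow_subsp a j : subsp (@mpow K n a j).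
Proof.
split.
- by move=> m _; rewrite /translate raddf0 mcoeff0.
- by move=> p q Hp Hq m Hm; rewrite translateD mcoeffD Hp // Hq // addr0.
- by move=> c p Hp m Hm; rewrite translateZ mcoeffZ Hp // mulr0.
Qed.

Lemma mpowM a i j p q : mpow a i p -> mpow a j q -> @mpow K n a (i + j) (p * q).
Proof.
move=> Hp Hq m Hm; rewrite translateM mcoeffM big1 // => -[k1 k2] /eqP /= Ek.
have Ed : mdeg m = (mdeg k1 + mdeg k2)%N by rewrite -mdegD; congr mdeg.
case: (ltnP (mdeg k1) i) => H1; first by rewrite Hp // mul0r.
by rewrite Hq ?mulr0 //; move: Hm H1 Ed; clear; lia.
Qed.

Lemma mpow_le a i j p : (j <= i)%N -> mpow a i p -> @mpow K n a j p.
Proof. by move=> ji Hp m Hm; apply: Hp; apply: leq_trans ji. Qed.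

End MP.

Section Comax.
Variables (K : fieldType) (n : nat).
Notation P := {mpoly K[n]}.

Lemma mpow1 (a : 'I_n -> K) (p : P) : (translate a p)@_0%MM = 0 -> mpow a 1 p.
Proof. by move=> H m; rewrite ltnS leqn0 mdeg_eq0 => /eqP ->. Qed.

Lemma coefX0 (i : 'I_n) : ('X_i : P)@_0%MM = 0.
Proof. by rewrite mcoeffX mnm1_eq0. Qed.
Lemma coefC0 (c : K) : (c%:MP : P)@_0%MM = c.
Proof. by rewrite mcoeffC eqxx mulr1. Qed.

Variables (a1 a2 : 'I_n -> K) (k : 'I_n).
Hypothesis dk : a2 k - a1 k != 0.
Definition sK : P := (a2 k - a1 k)^-1 *: ('X_k - (a1 k)%:MP).
Definition tK : P := 1 - sK.
Definition uK : P := sK ^+ 4 * (35%:R * tK^+3 + 21%:R * sK * tK^+2 + 7%:R * sK^+2 * tK + sK^+3).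
Definition vK : P := tK ^+ 4 * (tK^+3 + 7%:R * sK * tK^+2 + 21%:R * sK^+2 * tK + 35%:R * sK^+3).

Lemma uvK : uK + vK = 1.
Proof. rewrite /uK /vK /tK. ring. Qed.

Lemma mpow_s : mpow a1 1 sK.
Proof.
apply: mpow1; rewrite /sK translateZ translateB translateX translateC mcoeffZ.
by rewrite mcoeffB mcoeffD coefX0 !coefC0 add0r subrr mulr0.
Qed.

Lemma mpow_t : mpow a2 1 tK.
Proof.
apply: mpow1; rewrite /tK /sK translateB translate1 translateZ translateB translateX translateC.
rewrite mcoeffB mcoeffZ mcoeffB mcoeffD coefX0 -mpolyC1 !coefC0 add0r mulVf //.
by rewrite subrr.
Qed.

Lemma mpow4 a (p : P) : mpow a 1 p -> mpow a 4 (p ^+ 4).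
Proof.
move=> H; rewrite !exprS expr0 mulr1.
apply: (@mpowM _ _ _ 1 3) => //; apply: (@mpowM _ _ _ 1 2) => //.
exact: (@mpowM _ _ _ 1 1).
Qed.

Lemma uK_in (I : P -> Prop) : is_ideal I -> (forall p, mpow a1 4 p -> I p) -> I uK.
Proof.
case=> _ _ IM H4; rewrite /uK mulrC; apply: IM; apply: H4; exact: mpow4 mpow_s.
Qed.
Lemma vK_in (I : P -> Prop) : is_ideal I -> (forall p, mpow a2 4 p -> I p) -> I vK.
Proof.
case=> _ _ IM H4; rewrite /vK mulrC; apply: IM; apply: H4; exact: mpow4 mpow_t.
Qed.

End Comax.

Lemma split_l m1 m2 (i : 'I_m1) : split (lshift m2 i) = inl i.
Proof. exact: (unsplitK (inl _ i)). Qed.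
Lemma split_r m1 m2 (j : 'I_m2) : split (rshift m1 j) = inr j.
Proof. exact: (unsplitK (inr _ j)). Qed.
Lemma sum_split (M : nmodType) m1 m2 (F : 'I_(m1 + m2) -> M) :
  \sum_k F k = \sum_i F (lshift m2 i) + \sum_j F (rshift m1 j).
Proof. exact: big_split_ord. Qed.

Section CRT.
Variables (K : fieldType) (V : lmodType K).
Lemma congr_sum (J : V -> Prop) m (c : 'I_m -> K) F G : subsp J ->
  (forall k, J (F k - G k)) -> J (\sum_k c k *: F k - \sum_k c k *: G k).
Proof.
move=> HJ H; rewrite -sumrB; apply: subsp_sum => // k.
by rewrite -scalerBr; apply: subspZ.
Qed.
End CRT.

Section CRT2.
Variables (K : fieldType) (n : nat).
Notation P := {mpoly K[n]}.

Lemma dim_modE (Vp I : P -> Prop) d : dim_mod Vp I d <-> mydim Vp I d.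
Proof. by []. Qed.

Definition glue m1 m2 (T : Type) (f : 'I_m1 -> T) (g : 'I_m2 -> T) (k : 'I_(m1 + m2)) : T :=
  match split k with inl i => f i | inr j => g j end.

Lemma glue_l m1 m2 T f g i : @glue m1 m2 T f g (lshift m2 i) = f i.
Proof. by rewrite /glue split_l. Qed.
Lemma glue_r m1 m2 T f g j : @glue m1 m2 T f g (rshift m1 j) = g j.
Proof. by rewrite /glue split_r. Qed.

Lemma sum_glue m1 m2 (c1 : 'I_m1 -> K) (c2 : 'I_m2 -> K) (f : 'I_m1 -> P) (g : 'I_m2 -> P) :
  \sum_k glue c1 c2 k *: glue f g k = \sum_i c1 i *: f i + \sum_j c2 j *: g j.
Proof.
rewrite sum_split; congr (_ + _); apply: eq_bigr => i _; by rewrite ?glue_l ?glue_r.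
Qed.

Lemma crt (I1 I2 : P -> Prop) u v m1 m2 : is_ideal I1 -> is_ideal I2 ->
  I1 u -> I2 v -> u + v = 1 -> colength I1 m1 -> colength I2 m2 ->
  colength (ideal_cap I1 I2) (m1 + m2).
Proof.
move=> HI1 HI2 u1 v2 uv [b1 [_ Ib1 Sb1]] [b2 [_ Ib2 Sb2]].
have S1 := ideal_subsp HI1; have S2 := ideal_subsp HI2.
case: HI1 => _ _ IM1; case: HI2 => _ _ IM2.
pose B := glue (fun i => b1 i * v) (fun j => b2 j * u).
pose B1 := glue b1 (fun _ : 'I_m2 => 0 : P).
pose B2 := glue (fun _ : 'I_m1 => 0 : P) b2.
have E1 k : I1 (B k - B1 k).
  case: (split_ordP k) => [i ->|j ->]; rewrite /B /B1 ?glue_l ?glue_r.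
    have -> : b1 i * v - b1 i = b1 i * (- u) by rewrite -[X in _ - X]mulr1 -mulrBr -uv; congr (_ * _); ring.
    by apply: IM1; apply: subspN.
  by rewrite subr0; apply: IM1.
have E2 k : I2 (B k - B2 k).
  case: (split_ordP k) => [i ->|j ->]; rewrite /B /B2 ?glue_l ?glue_r.
    by rewrite subr0; apply: IM2.
  have -> : b2 j * u - b2 j = b2 j * (- v) by rewrite -[X in _ - X]mulr1 -mulrBr -uv; congr (_ * _); ring.
  by apply: IM2; apply: subspN.
exists B; split => //.
- move=> c [J1 J2].
  have H1 : I1 (\sum_k c k *: B1 k).
    have := subspB S1 J1 (congr_sum c S1 E1); congr I1.
    by rewrite opprB addrC subrK.
  have H2 : I2 (\sum_k c k *: B2 k).
    have := subspB S2 J2 (congr_sum c S2 E2); congr I2.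
    by rewrite opprB addrC subrK.
  have e1 : \sum_k c k *: B1 k = \sum_i c (lshift m2 i) *: b1 i.
    rewrite sum_split [X in _ + X]big1 ?addr0; last by move=> j _; rewrite /B1 glue_r scaler0.
    by apply: eq_bigr => i _; rewrite /B1 glue_l.
  have e2 : \sum_k c k *: B2 k = \sum_j c (rshift m1 j) *: b2 j.
    rewrite sum_split [X in X + _]big1 ?add0r; last by move=> j _; rewrite /B2 glue_l scaler0.
    by apply: eq_bigr => i _; rewrite /B2 glue_r.
  move: H1 H2; rewrite e1 e2 => /Ib1 H1 /Ib2 H2 k.
  by case: (split_ordP k) => [i ->|j ->].
- move=> p _; have [c1 Hc1] := Sb1 p I; have [c2 Hc2] := Sb2 p I.
  exists (glue c1 c2); split.
  + have e : \sum_k glue c1 c2 k *: B1 k = \sum_i c1 i *: b1 i.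
      by rewrite /B1 sum_glue [X in _ + X]big1 ?addr0 // => j _; apply: scaler0.
    have := subspB S1 Hc1 (congr_sum (glue c1 c2) S1 E1); congr I1.
    rewrite e; ring.
  + have e : \sum_k glue c1 c2 k *: B2 k = \sum_i c2 i *: b2 i.
      by rewrite /B2 sum_glue [X in X + _]big1 ?add0r // => j _; apply: scaler0.
    have := subspB S2 Hc2 (congr_sum (glue c1 c2) S2 E2); congr I2.
    rewrite e; ring.
Qed.
End CRT2.


Section M2.
Variables (K : fieldType) (n : nat).
Notation P := {mpoly K[n]}.

Lemma add_subsp (I J : P -> Prop) : subsp I -> subsp J -> subsp (ideal_add I J).
Proof.
move=> SI SJ; split.
- by exists 0, 0; rewrite addr0; split => //; apply: subsp0.
- move=> p q [q1 [r1 [H1 H2 ->]]] [q2 [r2 [H3 H4 ->]]].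
  exists (q1 + q2), (r1 + r2); split; [exact: subspD|exact: subspD|ring].
- move=> c p [q1 [r1 [H1 H2 ->]]]; exists (c *: q1), (c *: r1); split;
    [exact: subspZ|exact: subspZ|by rewrite scalerDr].
Qed.

Lemma mcoeff_sum m (I : finType) (F : I -> P) : (\sum_i F i)@_m = \sum_i (F i)@_m.
Proof. exact: (raddf_sum (mcoeff m)). Qed.

Lemma translate_sum (a : 'I_n -> K) (I : finType) (F : I -> P) :
  translate a (\sum_i F i) = \sum_i translate a (F i).
Proof. by rewrite /translate raddf_sum. Qed.

Definition eb (a : 'I_n -> K) : 'I_n.+1 -> P := ext (fun i => 'X_i - (a i)%:MP) 1.

Lemma span_m2 (a : 'I_n -> K) (p : P) :
  exists cc : 'I_n.+1 -> K, mpow a 2 (p - \sum_k cc k *: eb a k).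
Proof.
set T := translate a p.
exists (ext (fun i => T@_U_(i)) T@_0); move=> m Hm.
rewrite translateB translate_sum sum_recr /eb !ext_max translateZ translate1.
rewrite (eq_bigr (fun i => T@_U_(i) *: 'X_i)); last first.
  by move=> i _; rewrite !ext_lift translateZ translateB translateX translateC addrK.
rewrite mcoeffB mcoeffD mcoeff_sum -/T mcoeffZ mcoeff1.
have [m0|m1] := boolP (mdeg m == 0%N).
  move: m0; rewrite mdeg_eq0 => /eqP ->; rewrite eqxx mulr1 big1 ?add0r ?subrr //.
  by move=> i _; rewrite mcoeffZ coefX0 mulr0.
have /mdeg1P [j /eqP ->] : mdeg m == 1%N by move: Hm m1; clear; case: (mdeg m) => [|[|]].
rewrite mnm1_eq0 mulr0 addr0 (bigD1 j) //= mcoeffZ mcoeffXU eqxx mulr1 big1 ?addr0 ?subrr //.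
by move=> i /negbTE ij; rewrite mcoeffZ mcoeffXU ij mulr0.
Qed.

Lemma ideal_in_m2 (I : P -> Prop) (a : 'I_n -> K) : is_ideal I ->
  colength (ideal_add I (mpow a 2)) n.+1 -> forall p, I p -> mpow a 2 p.
Proof.
move=> HI [b [_ Ib _]] p Ip; apply: NNPP => Np.
have SJ : subsp (ideal_add I (mpow a 2)) := add_subsp (ideal_subsp HI) (mpow_subsp a 2).
have [cc Hcc] := span_m2 a p.
have Jc : ideal_add I (mpow a 2) (\sum_k cc k *: eb a k).
  exists p, (- (p - \sum_k cc k *: eb a k)); split => //.
    exact: subspN (mpow_subsp a 2) _ Hcc.
  by rewrite opprB addrC subrK.
have nz : exists k, cc k != 0.
  apply: NNPP => H; apply: Np; move: Hcc; rewrite big1 ?subr0 // => k _.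
  have : ~ (cc k != 0) by move=> H'; apply: H; exists k.
  by move/negP; rewrite negbK => /eqP ->; rewrite scale0r.
have Sb : forall j, spanJ (ideal_add I (mpow a 2)) (eb a) (b j).
  move=> j; have [cj Hcj] := span_m2 a (b j); exists cj.
  by exists 0, (b j - \sum_k cj k *: eb a k); split => //; [case: HI | rewrite add0r].
have := indep_lt SJ Jc nz Sb Ib; rewrite ltnn //.
Qed.

End M2.


Section Uniq.
Variables (K : fieldType) (n : nat) (S : comNzRingType).
Notation P := {mpoly K[n]}.
Lemma mor_uniq (f g : P -> S) :
  f 0 = 0 -> g 0 = 0 ->
  (forall x y, f (x + y) = f x + f y) -> (forall x y, g (x + y) = g x + g y) ->
  (forall x y, f (x * y) = f x * f y) -> (forall x y, g (x * y) = g x * g y) ->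
  f 1 = 1 -> g 1 = 1 ->
  (forall c, f c%:MP = g c%:MP) -> (forall i, f 'X_i = g 'X_i) -> forall p, f p = g p.
Proof.
move=> f0 g0 fD gD fM gM f1 g1 fC fX p; rewrite [p]mpolyE.
rewrite (big_morph f fD f0) (big_morph g gD g0); apply: eq_bigr => m _.
rewrite -mul_mpolyC fM gM fC; congr (_ * _).
rewrite -mmap1_id /mmap1 (big_morph f fM f1) (big_morph g gM g1); apply: eq_bigr => i _.
elim: (m i) => [|k IH]; first by rewrite !expr0 f1 g1.
by rewrite !exprS fM gM IH fX.
Qed.
End Uniq.

Section Line.
Variables (K : fieldType) (n : nat) (a1 d : 'I_n -> K).
Notation P := {mpoly K[n]}.
Definition hl (i : 'I_n) : {poly K} := (d i)%:P * 'X + (a1 i)%:P.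
Definition L (p : P) : {poly K} := mmap polyC hl p.

Lemma LM p q : L (p * q) = L p * L q. Proof. by rewrite /L rmorphM. Qed.
Lemma LD p q : L (p + q) = L p + L q. Proof. by rewrite /L raddfD. Qed.
Lemma LB p q : L (p - q) = L p - L q. Proof. by rewrite /L raddfB. Qed.
Lemma LZ c p : L (c *: p) = c *: L p. Proof. by rewrite /L mmapZ mul_polyC. Qed.
Lemma LC c : L c%:MP = c%:P. Proof. by rewrite /L mmapC. Qed.
Lemma L0 : L 0 = 0. Proof. by rewrite /L raddf0. Qed.
Lemma L1 : L 1 = 1. Proof. by rewrite -mpolyC1 LC. Qed.
Lemma LX i : L 'X_i = hl i. Proof. by rewrite /L mmapX mmap1U. Qed.

Lemma inv_translate (a : 'I_n -> K) (p : P) :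
  translate a p \mPo [tuple 'X_i - (a i)%:MP | i < n] = p.
Proof.
pose lq := [tuple 'X_i - (a i)%:MP | i < n].
have := @mor_uniq K n _ (comp_mpoly lq \o comp_mpoly [tuple ('X_i + (a i)%:MP) | i < n]) idfun.
apply => [||x y|//|x y|//||//|c|i] /=; rewrite ?raddf0 ?rmorphD ?rmorphM ?rmorph1 //; first by rewrite !comp_mpolyC.
rewrite -/(translate a 'X_i) translateX comp_mpolyD comp_mpolyC.
rewrite comp_mpolyXU -tnth_nth tnth_map tnth_ord_tuple subrK //.
Qed.

Lemma L_comp (T : P) (lq : n.-tuple P) :
  L (T \mPo lq) = mmap polyC (fun i => L (tnth lq i)) T.
Proof.
have := @mor_uniq K n _ (L \o comp_mpoly lq) (mmap polyC (fun i => L (tnth lq i))).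
apply => [||x y|x y|x y|x y|||c|i] /=; rewrite ?raddf0 ?rmorphD ?rmorphM ?rmorph1 ?L0 ?LD ?LM ?L1 //. all: try (rewrite comp_mpolyC LC mmapC //).
by rewrite comp_mpolyXU /mmap msuppX big_seq1 mcoeffX eqxx rmorph1 mul1r mmap1U -tnth_nth.
Qed.

Lemma L_m2 (a : 'I_n -> K) (c : K) : (forall i, a i = a1 i + c * d i) ->
  forall p, mpow a 2 p -> exists Q, L p = ('X - c%:P) ^+ 2 * Q.
Proof.
move=> Ha p Hp; rewrite -(inv_translate a p) L_comp; set T := translate a p.
have Lq i : L (tnth [tuple 'X_j - (a j)%:MP | j < n] i) = (d i)%:P * ('X - c%:P).
  by rewrite tnth_map tnth_ord_tuple LB LX LC /hl Ha polyCD polyCM; ring.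
exists (\sum_(m <- msupp T) (T@_m)%:P * (\prod_i (d i) ^+ (m i))%:P * ('X - c%:P) ^+ (mdeg m - 2)).
rewrite /mmap mulr_sumr; apply: eq_big_seq => m Hm.
have Hd : (2 <= mdeg m)%N.
  rewrite leqNgt; apply/negP => H; move: Hm; rewrite mcoeff_msupp Hp // eqxx //.
rewrite /mmap1 (eq_bigr (fun i => ((d i)%:P) ^+ (m i) * ('X - c%:P) ^+ (m i))); last first.
  by move=> i _; rewrite Lq exprMn.
rewrite big_split /= prodrXr -mdegE -(subnKC Hd) exprD rmorph_prod.
rewrite (eq_bigr (fun i => ((d i)%:P) ^+ (m i))); last by move=> i _; rewrite rmorphXn.
set A := \prod_i _; set B := ('X - c%:P); rewrite subnKC //; ring.
Qed.

Definition psi (s c : K) (q : P) : K := s * 2 * (L q).[c] - (L q)^`().[c].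

Lemma psi_m2 (a : 'I_n -> K) (s c : K) : (forall i, a i = a1 i + c * d i) ->
  forall p, mpow a 2 p -> psi s c p = 0.
Proof.
move=> Ha p /(L_m2 Ha) [Q EQ]; rewrite /psi EQ derivM expr2 derivM derivXsubC.
rewrite !hornerE /= subrr; ring.
Qed.

Lemma psiD s c p q : psi s c (p + q) = psi s c p + psi s c q.
Proof. rewrite /psi LD derivD !hornerD; ring. Qed.
Lemma psiZ s c k p : psi s c (k *: p) = k * psi s c p.
Proof. rewrite /psi LZ derivZ !hornerZ; ring. Qed.
Lemma psiB s c p q : psi s c (p - q) = psi s c p - psi s c q.
Proof. by rewrite -scaleN1r psiD psiZ; ring. Qed.
Lemma psi1 s c : psi s c 1 = s * 2.
Proof. by rewrite /psi L1 derivC !hornerE; ring. Qed.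

Lemma size_prod_seq_le (I : Type) (r : seq I) (F : I -> {poly K}) :
  (size (\prod_(i <- r) F i)%R <= (\sum_(i <- r) (size (F i)).-1).+1)%N.
Proof.
elim: r => [|x r IH]; first by rewrite !big_nil size_poly1.
rewrite !big_cons; apply: leq_trans (size_mul_leq _ _) _.
move: IH; set A := size (\prod_(j <- r) F j); set B := size (F x); clear; lia.
Qed.

Lemma size_hl i : (size (hl i) <= 2)%N.
Proof.
rewrite /hl size_MXaddC; case: ifP => // _.
by have := size_polyC_leq1 (d i).
Qed.

Lemma size_mmap1 m : (size (mmap1 hl m) <= (mdeg m).+1)%N.
Proof.
rewrite /mmap1 -big_enum; apply: leq_trans (size_prod_seq_le _ _) _.
rewrite ltnS big_enum mdegE /=; apply: leq_sum => i _.
have := size_poly_exp_leq (hl i) (m i); have := size_hl i.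
set A := size (hl i ^+ m i); set B := size (hl i); clear; nia.
Qed.

Lemma size_L (w : P) : (msize w <= 3)%N -> (size (L w) <= 3)%N.
Proof.
move=> Hw; rewrite /L /mmap big_seq.
apply: (big_ind (fun g : {poly K} => size g <= 3)%N) => [|x y Hx Hy|m Hm].
- by rewrite size_poly0.
- by apply: leq_trans (size_polyD _ _) _; rewrite geq_max Hx Hy.
- rewrite mul_polyC; apply: leq_trans (size_scale_leq _ _) _.
  apply: leq_trans (size_mmap1 m) _.
  by have := msize_mdeg_lt Hm; move: Hw; clear; lia.
Qed.

Lemma quad_id (g : {poly K}) : (size g <= 3)%N ->
  (-1) * 2 * g.[0] - g^`().[0] + (1 * 2 * g.[1] - g^`().[1]) = 0.
Proof.
move=> Hg.
have -> : g = (g`_0)%:P + g`_1 *: 'X + g`_2 *: 'X^2.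
  apply/polyP => i; rewrite !coefE.
  case: i => [|[|[|i]]] /=; rewrite ?mulr0 ?mulr1 ?addr0 ?add0r //.
  by rewrite nth_default //; apply: leq_trans Hg _.
rewrite !derivE !hornerE /=; ring.
Qed.

Lemma psi_sum (w : P) : (msize w <= 3)%N -> psi (-1) 0 w + psi 1 1 w = 0.
Proof. by move=> Hw; rewrite /psi; apply: quad_id; apply: size_L. Qed.

End Line.


Definition tbl : seq (nat * nat) := flatten [seq [seq (i, j) | j <- iota i (6 - i)] | i <- iota 0 6].

Lemma size_tbl : size tbl = 21%N. Proof. by []. Qed.

Lemma tbl_mem i j : (i <= j)%N -> (j < 6)%N -> (i, j) \in tbl.
Proof.
by case: j => [|[|[|[|[|[|j]]]]]]; case: i => [|[|[|[|[|[|i]]]]]].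
Qed.

Definition mon (k : 'I_28) : 'X_{1..6} :=
  if (k : nat) == 0%N then 0%MM
  else if (k <= 6)%N then U_(inord k.-1)%MM
  else let p := nth (0, 0)%N tbl (k - 7) in (U_(inord p.1) + U_(inord p.2))%MM.

Lemma mon_cover (m : 'X_{1..6}) : (mdeg m < 3)%N -> exists k, mon k = m.
Proof.
move=> Hm.
have [m0|m0] := boolP (mdeg m == 0%N).
  exists (Ordinal (isT : (0 < 28)%N)); rewrite /mon /=.
  by move: m0; rewrite mdeg_eq0 => /eqP ->.
have deg1 m' : mdeg m' = 1%N -> exists k, mon k = m'.
  move=> /eqP /mdeg1P [i /eqP ->].
  have Hi : (i.+1 < 28)%N by have := ltn_ord i; clear; lia.
  exists (Ordinal Hi); rewrite /mon /=; have -> : (i.+1 <= 6)%N by exact: ltn_ord i.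
  by rewrite inord_val.
have [m1|m1] := boolP (mdeg m == 1%N); first exact: deg1 (eqP m1).
have Hd2 : mdeg m = 2%N by move: Hm m0 m1; clear; case: (mdeg m) => [|[|[|]]].
have [i Hi] : exists i, m i != 0%N.
  apply: NNPP => H; move: m0; rewrite mdeg_eq0; apply/negP; rewrite negbK; apply/eqP/mnmP => i.
  rewrite mnm0E; apply/eqP; apply: NNPP => H'; apply: H; by exists i; apply/negP.
have Em : m = (m - U_(i) + U_(i))%MM.
  apply/mnmP => j; rewrite mnmDE mnmBE mnm1E.
  case: (eqVneq i j) => [<-|ne] /=; last by rewrite subn0 addn0.
  by rewrite subnK // lt0n.
have : mdeg (m - U_(i))%MM = 1%N by move: Hd2; rewrite {1}Em mdegD mdeg1; clear; lia.
move=> /eqP /mdeg1P [j /eqP Ej]; rewrite Ej in Em.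
wlog le_ji : i j Em {Hi Ej} / (j <= i)%N.
  move=> W; case: (leqP j i) => [le|lt]; first exact: W Em le.
  by apply: (W j i) => //; [rewrite addmC | apply: ltnW].
have Hin := tbl_mem le_ji (ltn_ord i).
have Hk : (7 + index (nat_of_ord j, nat_of_ord i) tbl < 28)%N.
  by move: Hin; rewrite -index_mem size_tbl; clear; lia.
exists (Ordinal Hk); rewrite /mon /= addnC addnK nth_index //.
by rewrite /= !inord_val Em.
Qed.

Section Span.
Variable K : fieldType.
Definition wK (k : 'I_28) : {mpoly K[6]} := 'X_[mon k].

Lemma deg2_span (p : {mpoly K[6]}) : deg_le 2 p ->
  exists c : 'I_28 -> K, p = \sum_k c k *: wK k.
Proof.
rewrite /deg_le => Hp.
have : forall m, m \in msupp p -> (mdeg m < 3)%N.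
  by move=> m Hm; apply: leq_trans (msize_mdeg_lt Hm) Hp.
rewrite {2}[p]mpolyE; elim: (msupp p) => [|m s IH] H.
  by exists (fun _ => 0); rewrite big_nil big1 // => k _; rewrite scale0r.
have [k Hk] := mon_cover (H m (mem_head _ _)).
have [c Hc] : exists c : 'I_28 -> K, \sum_(i <- s) p@_i *: 'X_[i] = \sum_k c k *: wK k.
  by apply: IH => m' Hm'; apply: H; rewrite inE Hm' orbT.
exists (fun i => c i + (if i == k then p@_m else 0)).
rewrite big_cons Hc addrC.
rewrite [RHS](eq_bigr (fun i => c i *: wK i + (if i == k then p@_m else 0) *: wK i)); last first.
  by move=> i _; rewrite scalerDl.
rewrite big_split /=; congr (_ + _).
rewrite (bigD1 k) //= eqxx big1 ?addr0; first by rewrite /wK Hk.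
by move=> i /negbTE ->; rewrite scale0r.
Qed.
End Span.


Lemma mdeg_mon (k : 'I_28) : (mdeg (mon k) < 3)%N.
Proof.
rewrite /mon; case: ifP => _; first by rewrite mdeg0.
case: ifP => _; first by rewrite mdeg1.
by rewrite mdegD !mdeg1.
Qed.

Section Main.
Variables (K : fieldType) (a1 a2 : 'I_6 -> K) (I1 I2 : {mpoly K[6]} -> Prop).
Hypothesis two : (2 : K) != 0.
Notation P := {mpoly K[6]}.

Lemma cap_subsp (A B : P -> Prop) : subsp A -> subsp B -> subsp (ideal_cap A B).
Proof.
move=> SA SB; split; first by split; apply: subsp0.
- by move=> p q [? ?] [? ?]; split; apply: subspD.
- by move=> c p [? ?]; split; apply: subspZ.
Qed.

Theorem main_gen : a1 <> a2 -> local_gor_1661 a1 I1 -> local_gor_1661 a2 I2 ->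
  colength (ideal_cap I1 I2) 28 /\
  exists h : nat, hR (ideal_cap I1 I2) 2 h /\ (h <= 27)%N.
Proof.
move=> Hne [[HI1 M41 _] [_ C21 _ C141 _]] [[HI2 M42 _] [_ C22 _ C142 _]].
have [k dk] : exists k, a2 k - a1 k != 0.
  apply: NNPP => H; apply: Hne; apply: functional_extensionality => k.
  apply/eqP; rewrite eq_sym -subr_eq0; apply: NNPP => H'; apply: H; exists k; exact/negP.
set u := uK a1 a2 k; set v := vK a1 a2 k.
have u1 : I1 u := uK_in a2 k HI1 M41.
have v2 : I2 v by apply: vK_in.
have uv : u + v = 1 := uvK a1 a2 k.
have vE : v = 1 - u by rewrite -uv; ring.
have uE : u = 1 - v by rewrite -uv; ring.
have C28 : colength (ideal_cap I1 I2) 28 := crt HI1 HI2 u1 v2 uv C141 C142.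
split => //.
set J := ideal_cap I1 I2.
have S1 := ideal_subsp HI1; have S2 := ideal_subsp HI2.
have SJ : subsp J := cap_subsp S1 S2.
have IM1 : forall p q, I1 q -> I1 (p * q) by case: HI1.
have IM2 : forall p q, I2 q -> I2 (p * q) by case: HI2.
have m21 := ideal_in_m2 HI1 C21.
have m22 := ideal_in_m2 HI2 C22.
pose d i := a2 i - a1 i.
pose ps0 := psi a1 d (-1) 0; pose ps1 := psi a1 d 1 1.
have ps0m q : I1 q -> ps0 q = 0.
  move=> Iq; apply: (@psi_m2 _ _ a1 d a1 (-1) 0); last exact: m21.
  by move=> i; rewrite mul0r addr0.
have ps1m q : I2 q -> ps1 q = 0.
  move=> Iq; apply: (@psi_m2 _ _ a1 d a2 1 1); last exact: m22.
  by move=> i; rewrite mul1r /d addrC subrK.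
pose Phi q := ps0 (q * v) + ps1 (q * u).
have PhiD p q : Phi (p + q) = Phi p + Phi q.
  by rewrite /Phi !mulrDl /ps0 /ps1 !psiD; ring.
have PhiZ c p : Phi (c *: p) = c * Phi p.
  by rewrite /Phi -!scalerAl /ps0 /ps1 !psiZ; ring.
have Phi0 : Phi 0 = 0 by rewrite -(scale0r 0) PhiZ mul0r.
have PhiJ q : J q -> Phi q = 0.
  case=> q1 q2; rewrite /Phi ps0m ?ps1m ?addr0 //; rewrite mulrC; [exact: IM2 | exact: IM1].
have Phiw (w : P) : (msize w <= 3)%N -> Phi w = 0.
  move=> Hw; rewrite /Phi.
  have -> : ps0 (w * v) = ps0 w - ps0 (w * u) by rewrite vE mulrBr mulr1 /ps0 psiB.
  have -> : ps1 (w * u) = ps1 w - ps1 (w * v) by rewrite uE mulrBr mulr1 /ps1 psiB.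
  rewrite (ps0m (w * u)) ?(ps1m (w * v)) ?subr0 /ps0 /ps1 ?psi_sum //.
  - exact: IM2.
  - exact: IM1.
have Phiv : Phi v = - 2.
  rewrite /Phi (ps1m (v * u)); last by rewrite mulrC; exact: IM2.
  have -> : v * v = 1 + u * (u - 2%:R) by rewrite vE; ring.
  have Z : ps0 (u * (u - 2%:R)) = 0 by apply: ps0m; rewrite mulrC; exact: IM1.
  by move: Z; rewrite addr0 /ps0 psiD psi1 => ->; rewrite addr0 mulN1r.
have PhiS m (y : 'I_m -> K) (f : 'I_m -> P) :
    Phi (\sum_i y i *: f i) = \sum_i y i * Phi (f i).
  rewrite (big_morph Phi PhiD Phi0); apply: eq_bigr => i _; exact: PhiZ.
have [c [Jc nzc]] : exists c : 'I_28 -> K, J (\sum_i c i *: wK K i) /\ exists i, c i != 0.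
  apply: NNPP => Hno.
  have Iw : indep J (@wK K).
    move=> c Jc i; apply: NNPP => /eqP nz; apply: Hno; exists c; split => //; by exists i.
  have If : indep J (ext (@wK K) v).
    move=> y; rewrite sum_recr ext_max => Jy.
    have := PhiJ _ Jy; rewrite PhiD PhiZ Phiv PhiS big1; last first.
      by move=> j _; rewrite ext_lift Phiw ?mulr0 // msizeX mdeg_mon.
    rewrite add0r mulrN => /eqP; rewrite oppr_eq0 mulf_eq0 (negbTE two) orbF => /eqP ymax.
    move=> i; case: (unliftP ord_max i) => [j ->|->] //.
    apply: (Iw (fun j => y (lift ord_max j))); move: Jy; rewrite ymax scale0r addr0.
    by congr J; apply: eq_bigr => j' _; rewrite ext_lift.
  case: C28 => B [_ _ SB].
  have := indep_le SJ (fun j => SB _ I) If; by [].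
have Sw : forall p, deg_le 2 p -> spanJ J (@wK K) p.
  move=> p /deg2_span [c' ->]; exists c'; rewrite subrr; exact: subsp0 SJ.
have [h [hlt hdim]] := exists_dim SJ Sw Jc nzc.
by exists h; split.
Qed.
End Main.


Theorem mainTheorem19 (R : realType)
    (a1 a2 : 'I_6 -> complex R) (I1 I2 : {mpoly (complex R)[6]} -> Prop) :
  a1 <> a2 ->
  local_gor_1661 a1 I1 ->
  local_gor_1661 a2 I2 ->
  colength (ideal_cap I1 I2) 28 /\
  exists h : nat,
    [/\ hR (ideal_cap I1 I2) 2 h, (h <= 27)%N, (27 < hgen 28 6 2)%N
      & hgen 28 6 2 = 28%N].
Proof.
move=> Hne H1 H2.
have two : (2 : complex R) != 0 by rewrite Num.Theory.pnatr_eq0.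
have [C [h [Hh Hle]]] := main_gen two Hne H1 H2.
split => //; exists h; split => //.
Qed.
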